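(* Fix an integer $k\ge1$ and let $o^{(k)}_{n,i}$ be the probability that a random Bernoulli text of length $n$ contains exactly $i$ clumps of $w$ that consist of exactly $k$ occurrences of $w$ ($k$-clumps). Define $$\mathfrak{K}^{(k)}(z,v)=\pi_w z^{\ell}\left(\frac{1}{1-K(z)}+(v-1)K(z)^{k-1}\right).$$ Then $$\sum_{n,i\ge0}o^{(k)}_{n,i}\,v^i z^n=N(z)+\frac{R(z)}{\pi_w z^{\ell}}\,\mathfrak{K}^{(k)}(z,v)\,\frac{1}{1-\dfrac{M(z)-K(z)}{\pi_w z^{\ell}}\,\mathfrak{K}^{(k)}(z,v)}\,U(z).$$
   Context: Let $\mathcal{A}$ be a finite alphabet with $|\mathcal{A}|\ge2$ and $w\in\mathcal{A}^*$ a fixed word of length $\ell=|w|\ge 2$. Bernoulli model: each letter $a$ has probability $p_a>0$, $\sum_a p_a=1$, $\mathbf{P}(a_1\cdots a_n)=\prod_i p_{a_i}$; for a language $L$, $L(z)=\sum_{x\in L}\mathbf{P}(x)z^{|x|}$; $\pi_w=\mathbf{P}(w)$. Occurrences of $w$ are position intervals where $w$ appears; two occurrences overlap if their intervals share a position; clumps are equivalence classes of occurrences under the transitive closure of overlapping; a $k$-clump is a clump containing exactly $k$ occurrences. Autocorrelation set $\mathcal{C}=\{\epsilon\}\cup\{e\in\mathcal{A}^+: |e|<\ell,\ \exists e'\in\mathcal{A}^+,\ we=e'w\}$, $\mathcal{C}_\circ=\mathcal{C}\setminus\{\epsilon\}$, $\mathcal{K}=\mathcal{C}_\circ\setminus\mathcal{C}_\circ\mathcal{A}^+$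 with generating function $K(z)$. Languages: $\mathcal{R}=\{r\in\mathcal{A}^*w: \text{no } r=xwy,\ |y|>0\}$; $\mathcal{M}=\{m\in\mathcal{A}^+: wm\in\mathcal{A}^*w,\ \text{no } wm=xwy,\ |x|>0,|y|>0\}$; $\mathcal{U}=\{u\in\mathcal{A}^*: \text{no } wu=xwy,\ |x|>0\}$; $\mathcal{N}=\{n: w\text{ not a factor of }n\}$, with generating functions $R,M,U,N$; explicitly, with $C(z)$ the generating function of $\mathcal{C}$ and $D(z)=\pi_w z^{\ell}+(1-z)C(z)$: $R=\pi_w z^\ell/D$, $M=1+(z-1)/D$, $U=1/D$, $N=C/D$. *)

(* Defs.v *)
From HB Require Import structures.
From mathcomp Require Import all_boot all_order all_algebra.
Set Implicit Arguments. Unset Strict Implicit. Unset Printing Implicit Defensive.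
Import Order.TTheory GRing.Theory Num.Theory.
Local Open Scope ring_scope.

(* A series is its coefficient sequence: f n = [z^n] f.                      *)
Definition fps (S : Type) := nat -> S.

Section FPS.
Variable S : unitRingType.

Definition fps_C (c : S) : fps S := fun n => if n == 0%N then c else 0.
Definition fps_one : fps S := fps_C 1.
Definition fps_Xn (l : nat) : fps S := fun n => if n == l then 1 else 0.
Definition fps_add (f g : fps S) : fps S := fun n => f n + g n.
Definition fps_sub (f g : fps S) : fps S := fun n => f n - g n.
Definition fps_mul (f g : fps S) : fps S :=
  fun n => \sum_(j < n.+1) f j * g (n - j)%N.
Definition fps_scale (c : S) (f : fps S) : fps S := fun n => c * f n.
Definition fps_exp (f : fps S) (m : nat) : fps S := iter m (fps_mul f) fps_one.
(* Division by z^l (exact when the first l coefficients of f vanish). *)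
Definition fps_divXn (l : nat) (f : fps S) : fps S := fun n => f (n + l)%N.
(* Multiplicative inverse (for f 0 a unit):
   g 0 = (f 0)^-1,  g n = - (f 0)^-1 * \sum_(j < n) f (n - j) * g j. *)
Fixpoint fps_inv_seq (f : fps S) (n : nat) : seq S :=
  match n with
  | 0 => [:: (f 0%N)^-1]
  | n'.+1 => let s := fps_inv_seq f n' in
      rcons s (- (f 0%N)^-1 * \sum_(j < n'.+1) f (n'.+1 - j)%N * nth 0 s j)
  end.
Definition fps_inv (f : fps S) : fps S := fun n => nth 0 (fps_inv_seq f n) n.
End FPS.

Section Words.
Variable A : finType.
Variable w : seq A.

Definition occ (x : seq A) (i : nat) : bool :=
  (i + size w <= size x)%N && (take (size w) (drop i x) == w).

Definition ovl (x : seq A) : rel 'I_(size x) :=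
  fun i j => [&& occ x i, occ x j, (i < j + size w)%N & (j < i + size w)%N].

Definition clumps (x : seq A) : {set {set 'I_(size x)}} :=
  [set [set j : 'I_(size x) | connect (@ovl x) i j] | i : 'I_(size x) & occ x i].

Definition nkclumps (k : nat) (x : seq A) : nat :=
  #|[set c in clumps x | #|c| == k]|.

(* autocorrelation set C (including epsilon) *)
Definition inC (e : seq A) : bool :=
  (e == [::]) ||
  [&& (0 < size e)%N, (size e < size w)%N &
      [exists e' : (size e).-tuple A, (0 < size e')%N && (w ++ e == e' ++ w)]].
Definition inCo (e : seq A) : bool := inC e && (e != [::]).
(* K = C_o \ C_o A^+ *)
Definition inK (e : seq A) : bool :=
  inCo e && ~~ [exists j : 'I_(size e), inCo (take j e) && (0 < size (drop j e))%N].
(* R : words of A^* w with no decomposition r = x w y, |y| > 0 *)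
Definition inR (r : seq A) : bool :=
  suffix w r && [forall i : 'I_(size r).+1, occ r i ==> (size r <= i + size w)%N].
(* M : m in A^+, w m in A^* w, no w m = x w y with |x|>0, |y|>0 *)
Definition inM (m : seq A) : bool :=
  [&& (0 < size m)%N, suffix w (w ++ m) &
      [forall i : 'I_(size (w ++ m)).+1,
          occ (w ++ m) i ==> ((i == 0%N :> nat) || (size (w ++ m) <= i + size w)%N)]].
(* U : no w u = x w y with |x| > 0 *)
Definition inU (u : seq A) : bool :=
  [forall i : 'I_(size (w ++ u)).+1, occ (w ++ u) i ==> (i == 0%N :> nat)].
Definition inN (x : seq A) : bool := ~~ infix w x.
End Words.

Section GF.
Variable R : fieldType.
Variable A : finType.
Variable p : A -> R.

Definition Pw (x : seq A) : R := \prod_(a <- x) p a.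

(* generating function L(z) = sum_{x in L} P(x) z^|x|, coefficients as
   constant polynomials in v *)
Definition gf (L : pred (seq A)) : fps {poly R} :=
  fun n => (\sum_(x : n.-tuple A | L x) Pw x)%:P.

Variable w : seq A.
Variable k : nat.

Definition o_k (n i : nat) : R :=
  \sum_(x : n.-tuple A | nkclumps w k x == i) Pw x.

Definition pi_w : R := Pw w.
Definition ell : nat := size w.

Definition Kg := gf (inK w).
Definition Rg := gf (inR w).
Definition Mg := gf (inM w).
Definition Ug := gf (inU w).
Definition Ng := gf (inN w).

(* frak K^{(k)}(z,v) = pi_w z^l (1/(1-K(z)) + (v-1) K(z)^{k-1}); v = 'X *)
Definition frakK : fps {poly R} :=
  fps_scale pi_w%:P
    (fps_mul (fps_Xn _ ell)
       (fps_add (fps_inv (fps_sub (fps_one _) Kg))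
                (fps_mul (fps_C ('X - 1)) (fps_exp Kg (k - 1))))).

Definition div_piz (f : fps {poly R}) : fps {poly R} :=
  fps_scale (pi_w^-1)%:P (fps_divXn ell f).

Definition rhs7 : fps {poly R} :=
  fps_add Ng
    (fps_mul
       (fps_mul (fps_mul (div_piz Rg) frakK)
          (fps_inv (fps_sub (fps_one _) (fps_mul (div_piz (fps_sub Mg Kg)) frakK))))
       Ug).
End GF.

(* Main.v *)
Require Import Defs.
From HB Require Import structures.
From mathcomp Require Import all_boot all_order all_algebra.
From Stdlib Require Import FunctionalExtensionality.
Set Implicit Arguments. Unset Strict Implicit. Unset Printing Implicit Defensive.

Section Conn.
Variable T : finType.
Lemma conn_closed (e : rel T) (P : pred T) x y :
  (forall u v, P u -> e u v -> P v) -> P x -> connect e x y -> P y.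
Proof.
move=> H Px /connectP [q pth ->]; elim: q x Px pth => //= b q IH x Px /andP [exb pth].
exact: (IH b (H _ _ Px exb) pth).
Qed.
Lemma conn_restrict (e e' : rel T) (P : pred T) x y :
  (forall u v, P u -> e u v -> P v && e' u v) -> P x -> connect e x y -> connect e' x y.
Proof.
move=> H Px /connectP [q pth ->]; elim: q x Px pth => /= [x|b q IH x Px /andP [exb pth]].
  by rewrite connect0.
case/andP: (H _ _ Px exb) => Pb e'xb.
exact: (connect_trans (connect1 e'xb) (IH b Pb pth)).
Qed.
End Conn.

Section Clumps.
Variables (l n k : nat).
Hypothesis hl : (0 < l)%N.

Definition ovO (O : seq nat) : rel 'I_n := fun i j =>
  [&& (i:nat) \in O, (j:nat) \in O, (i < j + l)%N & (j < i + l)%N].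
Definition clsO O (i : 'I_n) : {set 'I_n} := [set j | connect (ovO O) i j].
Definition clumpsO O := [set clsO O i | i : 'I_n & (i:nat) \in O].
Definition NO O := #|[set c in clumpsO O | #|c| == k]|.

Fixpoint fr (a : nat) (s : seq nat) : nat :=
  if s is b :: t then if (b < a + l)%N then (fr b t).+1 else 0 else 0.
Fixpoint cnt (a c : nat) (s : seq nat) : nat :=
  if s is b :: t then if (b < a + l)%N then cnt b c.+1 t else (c == k) + cnt b 1 t
  else (c == k).
Definition cnt' s := if s is b :: t then cnt b 1 t else 0.

Lemma fr_le a s : (fr a s <= size s)%N.
Proof. by elim: s a => //= b t IH a; case: ifP => // _; rewrite ltnS. Qed.

Lemma cnt_split a c s : cnt a c s = (c + fr a s == k) + cnt' (drop (fr a s) s).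
Proof.
elim: s a c => [|b t IH] a c /=; first by rewrite /= !addn0.
case: ifP => _; last by rewrite addn0 drop0 /=.
by rewrite IH addnS addSn.
Qed.

Lemma sep a s : sorted ltn (a :: s) ->
  forall u v, u \in a :: take (fr a s) s -> v \in drop (fr a s) s -> (u + l <= v)%N.
Proof.
elim: s a => [|b t IH] a //= /andP [ab st] u v.
case: ifP => hb.
  rewrite /= inE => /orP [/eqP ->|hu] hv.
    apply: leq_trans (IH b st b v _ hv); first by rewrite leq_add2r ltnW.
    by rewrite inE eqxx.
  by apply: (IH b st u v hu hv).
rewrite take0 drop0 inE => /eqP -> hv.
move: hv; rewrite inE => /orP [/eqP ->|hv]; first by rewrite leqNgt hb.
have := order_path_min ltn_trans st; move/allP/(_ v hv) => bv.
by apply: leq_trans (ltnW bv); rewrite leqNgt hb.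
Qed.

Lemma chain O a s : {subset a :: s <= O} -> sorted ltn (a :: s) ->
  all (fun u => u < n)%N (a :: s) ->
  forall ia : 'I_n, (ia : nat) = a ->
  forall j : 'I_n, (j : nat) \in a :: take (fr a s) s -> connect (ovO O) ia j.
Proof.
elim: s a => [|b t IH] a sub /= srt alln ia ea j.
  by rewrite inE => /eqP e; rewrite (_ : j = ia) ?connect0 //; apply: val_inj => /=; rewrite e ea.
case: ifP => hb; last first.
  by rewrite take0 inE => /eqP e; rewrite (_ : j = ia) ?connect0 //; apply: val_inj => /=; rewrite e ea.
case/andP: srt => ab srt; case/and3P: alln => an bn alln.
rewrite inE => /orP [/eqP e|hj].
  by rewrite (_ : j = ia) ?connect0 //; apply: val_inj => /=; rewrite e ea.
have ovab : ovO O ia (Ordinal bn).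
  rewrite /ovO /= ea !sub ?inE ?eqxx ?orbT // hb andbT.
  by rewrite /= ltn_addr.
apply: connect_trans (connect1 ovab) _.
apply: (IH b) => //; first by move=> u hu; apply: sub; rewrite inE hu orbT.
by rewrite /= bn.
Qed.

Lemma card_mem_ord (s : seq nat) : uniq s -> all (fun u => u < n)%N s ->
  #|[set j : 'I_n | (j:nat) \in s]| = size s.
Proof.
move=> us alls; rewrite cardE -(size_map val).
apply: perm_size; apply: uniq_perm; first by rewrite map_inj_uniq ?enum_uniq //; apply: val_inj.
  by [].
move=> u; apply/mapP/idP => [[j]|hu]; first by rewrite mem_enum inE => h ->.
by exists (Ordinal (allP alls u hu)); rewrite // mem_enum inE.
Qed.

Lemma ovO_sym O : symmetric (ovO O).
Proof. by move=> i j; rewrite /ovO; do 2!case: (_ \in O); rewrite //= andbC. Qed.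

Lemma NO_nil : NO [::] = 0.
Proof.
apply/eqP; rewrite cards_eq0; apply/eqP/setP => c; rewrite !inE.
by apply/negbTE/negP => /andP [/imsetP [i]]; rewrite inE in_nil.
Qed.

Lemma NO_cnt m : forall a s, (size s < m)%N -> sorted ltn (a :: s) ->
  all (fun u => u < n)%N (a :: s) -> NO (a :: s) = cnt a 1 s.
Proof.
elim: m => // m IHm a s hsz srt alln.
set O := a :: s; set r := fr a s; set O1 := a :: take r s; set O2 := drop r s.
have eO : O = O1 ++ O2 by rewrite /O /O1 /O2 /= cat_take_drop.
have uO : uniq O by apply: (sorted_uniq ltn_trans ltnn).
have memO u : (u \in O) = (u \in O1) || (u \in O2) by rewrite eO mem_cat.
have hsep := sep srt.
have an : (a < n)%N by case/andP: alln.
set ia := Ordinal an.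
set C1 := [set j : 'I_n | (j:nat) \in O1].
have ch := @chain O a s (fun u h => h) srt alln ia erefl.
have cl1 (i : 'I_n) : (i : nat) \in O1 -> clsO O i = C1.
  move=> hi; apply/setP => j; rewrite !inE; apply/idP/idP => hj.
    apply: (conn_closed (P := fun j : 'I_n => (j:nat) \in O1)) hi hj.
    move=> u v hu /and4P [_ vO uv vu]; move: vO; rewrite memO => /orP [//|v2].
    by have := hsep _ _ hu v2; rewrite leqNgt vu.
  apply: connect_trans (ch j hj).
  by rewrite (sym_connect_sym (@ovO_sym O)); apply: ch.
have cl2 (i : 'I_n) : (i : nat) \in O2 -> clsO O i = clsO O2 i.
  move=> hi; apply/setP => j; rewrite !inE; apply/idP/idP => hj.
    apply: (conn_restrict (P := fun j : 'I_n => (j:nat) \in O2)) hi hj.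
    move=> u v hu /and4P [uO' vO uv vu]; rewrite /ovO hu uv vu !andbT /=.
    move: vO; rewrite memO => /orP [v1|->] //.
    by have := hsep _ _ v1 hu; rewrite leqNgt uv.
  apply: connect_sub hj => u v /and4P [uO' vO uv vu]; apply: connect1.
  by rewrite /ovO uv vu !memO uO' vO !orbT.
have eclumps : clumpsO O = C1 |: clumpsO O2.
  apply/setP => c; rewrite in_setU1; apply/imsetP/orP => [[i]|].
    rewrite inE memO => /orP [h1|h2] ->; first by left; rewrite cl1.
    by right; rewrite cl2 //; apply/imsetP; exists i; rewrite ?inE.
  case => [/eqP ->|/imsetP [i]].
    exists ia; first by rewrite inE /= /O inE eqxx.
    by rewrite cl1 //= inE eqxx.
  rewrite inE => hi ->; exists i; last by rewrite cl2.
  by rewrite inE memO hi orbT.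
have C1n : C1 \notin clumpsO O2.
  apply/negP => /imsetP [i]; rewrite inE => hi e.
  have : i \in C1 by rewrite e inE connect0.
  rewrite inE => h1; have := hsep _ _ h1 hi.
  rewrite leqNgt => /negP; apply; rewrite -{1}(addn0 i) ltn_add2l //.
have cC1 : #|C1| = r.+1.
  rewrite card_mem_ord.
    by rewrite /O1 /= size_takel // fr_le.
  by move: uO; rewrite eO cat_uniq => /andP [].
  apply/allP => u hu; apply: (allP alln); by rewrite -/O memO hu.
have eNO : NO O = (#|C1| == k) + NO O2.
  rewrite /NO eclumps.
  case hk: (#|C1| == k).
    rewrite (_ : [set c in C1 |: clumpsO O2 | #|c| == k] =
                 C1 |: [set c in clumpsO O2 | #|c| == k]); last first.
      by apply/setP => c; rewrite !inE; case: eqP => [->|]; rewrite ?hk ?eqxx.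
    by rewrite cardsU1 inE (negbTE C1n).
  rewrite add0n; apply: eq_card => c; rewrite !inE; case: eqP => [->|] //.
  by rewrite hk (negbTE C1n).
rewrite eNO cnt_split cC1 add1n -/r.
congr (_ + _).
have srt2 : sorted ltn O2.
  apply: (subseq_sorted ltn_trans (drop_subseq _ _)); exact: (path_sorted srt).
have all2 : all (fun u => u < n)%N O2.
  by apply/allP => u hu; apply: (allP alln); rewrite -/O memO hu orbT.
rewrite /O2; case e2: (drop r s) => [|b t] /=; first exact: NO_nil.
apply: IHm; rewrite -?e2 //.
have : size (drop r s) = (size t).+1 by rewrite e2.
rewrite size_drop => h; rewrite -ltnS; apply: leq_trans hsz.
by rewrite ltnS -h leq_subr.
Qed.

End Clumps.

Section Occ.
Variable A : finType.
Variable w : seq A.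
Hypothesis hw : (0 < size w)%N.
Local Notation l := (size w).
Local Notation occ := (occ w).

Lemma occ_drop x d i : occ (drop d x) i = occ x (i + d).
Proof.
rewrite /Defs.occ size_drop drop_drop.
case: (leqP d (size x)) => hd.
  by rewrite leq_subRL // addnCA addnA.
have -> : (size x - d = 0)%N by apply/eqP; rewrite subn_eq0 ltnW.
rewrite leqNgt (leq_trans hw (leq_addl _ _)) /=; symmetry; apply/negbTE.
rewrite negb_and -ltnNge; apply/orP; left; apply: (leq_trans hd); by rewrite addnAC leq_addl.
Qed.

Lemma occ_take x m i : occ (take m x) i = occ x i && (i + l <= m)%N.
Proof.
rewrite /Defs.occ size_take_min; case: (leqP (i + l) m) => him.
  have hi : (i <= m)%N by apply: leq_trans him; apply: leq_addr.
  rewrite andbT -[in take m x](subnK hi) -take_drop take_takel; last by rewrite leq_subRL // addnC.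
  by rewrite leq_min him.
by rewrite andbF leq_min leqNgt him.
Qed.

Lemma occ0_cat z : occ (w ++ z) 0.
Proof. by rewrite /Defs.occ size_cat add0n leq_addr drop0 take_size_cat //=. Qed.
Lemma drop_occ x d : occ x d -> w ++ drop (d + l) x = drop d x.
Proof.
case/andP => _ /eqP e; rewrite -[RHS](cat_take_drop l) e drop_drop.
by rewrite addnC.
Qed.

Lemma occE x i : occ x i -> x = take i x ++ w ++ drop (i + l) x.
Proof. by move/drop_occ ->; rewrite cat_take_drop. Qed.

Lemma occ_cat_l (u v : seq A) i : occ (u ++ v) (size u + i) = occ v i.
Proof. by rewrite addnC -occ_drop drop_size_cat. Qed.

Lemma suffix_occ r : suffix w r = (l <= size r)%N && occ r (size r - l).
Proof.
rewrite suffixE; case: (leqP l (size r)) => hl /=.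
  rewrite /Defs.occ subnK // leqnn /= take_oversize //.
  by rewrite size_drop subKn.
have -> : (size r - l = 0)%N by apply/eqP; rewrite subn_eq0 ltnW.
by rewrite drop0; apply/negbTE; apply: contraTneq hl => ->; rewrite ltnn.
Qed.

Lemma occ_lt x i : occ x i -> (i < size x)%N.
Proof.
by case/andP => h _; apply: leq_trans h; rewrite -addn1 leq_add2l.
Qed.

Lemma infix_occ x : infix w x = [exists i : 'I_(size x), occ x i].
Proof.
apply/infixP/existsP => [[s [s' e]]|[i hi]].
  have hs : occ x (size s) by rewrite e -(addn0 (size s)) occ_cat_l occ0_cat.
  by exists (Ordinal (occ_lt hs)).
by exists (take i x), (drop (i + l) x); apply: occE.
Qed.

Definition os x := [seq i <- iota 0 (size x) | occ x i].

Lemma mem_os x i : (i \in os x) = occ x i.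
Proof.
rewrite mem_filter mem_iota add0n /=; case h: (occ x i) => //=.
exact: occ_lt.
Qed.

Lemma sorted_os x : sorted ltn (os x).
Proof. exact: (sorted_filter ltn_trans _ (iota_ltn_sorted 0 _)). Qed.

Lemma all_os x : all (fun i => i < size x)%N (os x).
Proof. by apply/allP => i; rewrite mem_os; apply: occ_lt. Qed.

Lemma filter_iota_cons (P : pred nat) m n a s :
  filter P (iota m n) = a :: s ->
  [/\ (m <= a)%N, P a, (forall i, (m <= i < a)%N -> ~~ P i) &
      s = filter P (iota a.+1 (m + n - a.+1))].
Proof.
elim: n m => [|n IH] m //=; case: ifP => hm.
  case=> <- <-; split => //; first by move=> i; rewrite ltnNge andbN.
  by rewrite addnS subSS addKn.
move/IH => [h1 h2 h3 h4]; split => //; first exact: ltnW.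
  move=> i /andP [mi ia]; case: (ltngtP m i) => [mi'|im|<-]; last by rewrite hm.
    by apply: h3; rewrite mi' ia.
  by rewrite leqNgt im in mi.
by rewrite h4 addSn addnS.
Qed.

Lemma os_cons x a s : os x = a :: s ->
  [/\ occ x a, (forall i, (i < a)%N -> ~~ occ x i) &
      forall i, (i \in s) = (a < i)%N && occ x i].
Proof.
move=> e; have := e; rewrite /os => /filter_iota_cons [_ ha hlt hs].
split; [exact: ha | by move=> i hi; apply: hlt; rewrite hi | ].
move=> i.
have := sorted_os x; rewrite e /= => pth.
have allg := order_path_min ltn_trans pth.
apply/idP/idP => [his|/andP [ai oi]].
  by rewrite (allP allg _ his) -mem_os e inE his orbT.
by move: oi; rewrite -mem_os e inE => /orP [/eqP ei|//]; rewrite ei ltnn in ai.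
Qed.

Lemma os_nil x : os x = [::] -> forall i, ~~ occ x i.
Proof. by move=> e i; rewrite -mem_os e. Qed.

Lemma filter_all_nil (T : Type) (P : pred T) s : all (fun x => ~~ P x) s -> filter P s = [::].
Proof. by elim: s => //= x s IH /andP [/negbTE -> /IH]. Qed.

Lemma os_drop x d : (d <= size x)%N ->
  os (drop d x) = map (subn^~ d) (filter (leq d) (os x)).
Proof.
move=> hd; rewrite /os size_drop.
have -> : iota 0 (size x) = iota 0 d ++ iota d (size x - d) by rewrite -iotaD subnKC.
rewrite !filter_cat.
rewrite (@filter_all_nil _ _ (filter _ (iota 0 d))); last first.
  by apply/allP => i; rewrite mem_filter mem_iota add0n /= -ltnNge => /andP [_ ->].
rewrite cat0s (_ : filter (leq d) (filter (occ x) (iota d (size x - d))) =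
   filter (occ x) (iota d (size x - d))); last first.
  by apply/all_filterP/allP => i; rewrite mem_filter mem_iota => /andP [_ /andP [->]].
have -> : iota d (size x - d) = map (addn d) (iota 0 (size x - d)) by rewrite -iotaDl addn0.
rewrite filter_map -map_comp.
rewrite (eq_map (g := id)); last by move=> i /=; rewrite addKn.
rewrite map_id; apply: eq_filter => i /=; by rewrite occ_drop addnC.
Qed.


End Occ.

Section Comb.
Variable A : finType.
Variable w : seq A.
Variable k : nat.
Hypothesis hw : (0 < size w)%N.
Local Notation l := (size w).
Local Notation occ := (occ w).
Local Notation os := (os w).

Lemma nk_NO x : nkclumps w k x = NO l (size x) k (os x).
Proof.
rewrite /nkclumps /NO /clumps /clumpsO.
have hm (i : 'I_(size x)) : ((i : nat) \in os x) = occ x i by rewrite (mem_os hw).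
have ec : @ovl A w x =2 ovO l (os x) by move=> i j; rewrite /ovl /ovO !hm.
apply: eq_card => c; rewrite !inE; congr (_ && _).
apply/imsetP/imsetP => [][i hi ->]; exists i; rewrite ?inE ?hm // in hi *;
  apply/setP => j; rewrite !inE (eq_connect ec) //.
Qed.

Lemma nk_cnt x : nkclumps w k x = cnt' l k (os x).
Proof.
rewrite nk_NO; case e: (os x) => [|a s] /=; first exact: NO_nil.
apply: (@NO_cnt l (size x) k hw (size s).+1) => //; rewrite -e ?sorted_os ?(all_os hw) //.
Qed.

Lemma cnt_shift a c s d : (d <= a)%N -> all (leq d) s ->
  cnt l k a c s = cnt l k (a - d) c (map (subn^~ d) s).
Proof.
elim: s a c => [|b s IH] a c //= da /andP [db alls].
by rewrite addnBAC // ltn_sub2rE // -!IH // (leq_trans da).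
Qed.

Lemma cnt_big a c c' s : (k < c)%N -> (k < c')%N -> cnt l k a c s = cnt l k a c' s.
Proof.
elim: s a c c' => [|b s IH] a c c' hc hc' /=.
  by rewrite !gtn_eqF.
case: ifP => _; first by apply: IH; apply: ltnW.
by rewrite !gtn_eqF.
Qed.

Definition phi c z := cnt l k 0 c (behead (os (w ++ z))).

Lemma os_wz z : os (w ++ z) = 0 :: behead (os (w ++ z)).
Proof.
rewrite /os size_cat; case: l hw => // l' _.
by rewrite addSn /= occ0_cat.
Qed.

Lemma os_cons2 x a b s : os x = a :: b :: s ->
  [/\ occ x b, (a < b)%N, (forall i, (a < i < b)%N -> ~~ occ x i) &
      all (leq b) s].
Proof.
move=> e; case: (os_cons hw e) => _ _ hm.
have pth : path ltn b s by have := sorted_os w x; rewrite e /= => /andP [].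
have allb := order_path_min ltn_trans pth.
have : b \in b :: s by rewrite inE eqxx.
rewrite hm => /andP [ab ob]; split => //.
  move=> i /andP [ai ib]; apply/negP => oi.
  have : i \in b :: s by rewrite hm ai oi.
  rewrite inE => /orP [/eqP ei|hs]; first by rewrite ei ltnn in ib.
  by have := allP allb i hs; rewrite ltnNge (ltnW ib).
by apply/allP => i /(allP allb) /ltnW.
Qed.

Lemma os_cons1 x a : os x = [:: a] -> forall i, (a < i)%N -> ~~ occ x i.
Proof.
by move=> e i ai; case: (os_cons hw e) => _ _ /(_ i); rewrite in_nil ai /= => <-.
Qed.

Lemma inR_take x j : (j <= size x)%N ->
  inR w (take j x) = (l <= j)%N && occ x (j - l) &&
                     [forall i : 'I_(j - l), ~~ occ x i].
Proof.
move=> hj; rewrite /inR suffix_occ size_takel //.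
case: (leqP l j) => hl /=; last by [].
rewrite occ_take subnK // leqnn andbT.
case ho: (occ x (j - l)) => //=.
apply/forallP/forallP => H i.
  apply/negP => oi.
  have hi : (i <= j)%N by apply: leq_trans (ltnW (ltn_ord i)) (leq_subr _ _).
  have h1 : (i + l < j)%N by rewrite addnC -ltn_subRL.
  have := H (Ordinal (hi : (i < j.+1)%N)); rewrite /= occ_take oi (ltnW h1) /=.
  by rewrite leqNgt h1.
apply/implyP; rewrite occ_take => /andP [oi il].
case: (ltnP i (j - l)) => hi.
  by have := H (Ordinal hi); rewrite oi.
by rewrite -(leq_add2r l) subnK in hi.
Qed.

Lemma inR_take_cons x a s j : os x = a :: s -> (j <= size x)%N ->
  inR w (take j x) = (j == a + l)%N.
Proof.
move=> e hj; case: (os_cons hw e) => oa lta _.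
rewrite inR_take //; apply/idP/eqP => [/andP [/andP [hl oj] /forallP H]|->].
  apply/eqP; rewrite -(subnK hl) eqn_add2r eqn_leq.
  rewrite leqNgt; apply/andP; split.
    by apply/negP => ha; have := H (Ordinal ha); rewrite oa.
  by rewrite leqNgt; apply/negP => h; have := lta _ h; rewrite oj.
rewrite leq_addl addnK oa /=; apply/forallP => i; exact: lta.
Qed.

Lemma inR_take_nil x j : os x = [::] -> inR w (take j x) = false.
Proof.
move=> e; rewrite /inR suffix_occ occ_take (negbTE (os_nil hw e _)).
by rewrite andbF.
Qed.

Lemma inN_os x : inN w x = (os x == [::]).
Proof.
rewrite /inN (infix_occ hw); apply/negP/eqP => [H|e].
  case e: (os x) => [|a s] //; case: (os_cons hw e) => oa _ _.
  by case: H; apply/existsP; exists (Ordinal (occ_lt hw oa)).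
by case/existsP => i; rewrite (negbTE (os_nil hw e _)).
Qed.

Lemma inM_occ m : inM w m =
  [&& (0 < size m)%N, occ (w ++ m) (size m) &
      [forall i : 'I_(size m), (0 < i)%N ==> ~~ occ (w ++ m) i]].
Proof.
rewrite /inM suffix_occ size_cat leq_addr addKn /=.
case: (size m > 0)%N => //=; case: (occ (w ++ m) (size m)) => //=.
apply/forallP/forallP => H i.
  apply/implyP => i0; apply/negP => oi.
  have hi : (i < (l + size m).+1)%N by rewrite ltnS (leq_trans (ltnW (ltn_ord i))) // leq_addl.
  have := H (Ordinal hi); rewrite /= oi /= eqn0Ngt i0 /= addnC leq_add2r.
  by rewrite leqNgt ltn_ord.
apply/implyP => oi; case: (ltnP i (size m)) => hi.
  have := H (Ordinal hi); rewrite /= oi implybF -eqn0Ngt => ->.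
  by [].
apply/orP; right; apply: (@leq_trans (size m + l)); first by rewrite addnC.
by rewrite leq_add2r.
Qed.

Lemma wtake z j : w ++ take j z = take (l + j) (w ++ z).
Proof. by rewrite take_cat ltnNge leq_addr /= addKn. Qed.

Lemma inM_take z j : (j <= size z)%N ->
  inM w (take j z) = [&& (0 < j)%N, occ (w ++ z) j &
      [forall i : 'I_j, (0 < i)%N ==> ~~ occ (w ++ z) i]].
Proof.
move=> hj; rewrite inM_occ size_takel // wtake occ_take addnC leqnn andbT.
case: (0 < j)%N => //=; case: (occ (w ++ z) j) => //=.
apply/forallP/forallP => H i; have := H i; rewrite occ_take.
  by rewrite [(l + j)%N]addnC leq_add2r (ltnW (ltn_ord i)) andbT.
by rewrite [(l + j)%N]addnC leq_add2r (ltnW (ltn_ord i)) andbT.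
Qed.

Lemma inM_take_cons z s b j : os (w ++ z) = 0 :: b :: s -> (j <= size z)%N ->
  inM w (take j z) = (j == b).
Proof.
move=> e hj; case: (os_cons2 e) => ob b0 hb _.
rewrite inM_take //; apply/idP/eqP => [/and3P [j0 oj /forallP H]|->].
  apply/eqP; rewrite eqn_leq; apply/andP; split.
    rewrite leqNgt; apply/negP => bj.
    by have := H (Ordinal bj); rewrite /= b0 ob.
  rewrite leqNgt; apply/negP => jb.
  by have := hb j; rewrite j0 jb oj => /(_ isT).
rewrite b0 ob /=; apply/forallP => i; apply/implyP => i0.
by apply: hb; rewrite i0 ltn_ord.
Qed.

Lemma inM_take_nil z j : os (w ++ z) = [:: 0] -> inM w (take j z) = false.
Proof.
move=> e; rewrite inM_occ size_take_min wtake occ_take.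
case: (ltnP 0 (minn j (size z))) => //= h.
by rewrite (negbTE (os_cons1 e h)).
Qed.

Lemma inU_os z : inU w z = (behead (os (w ++ z)) == [::]).
Proof.
rewrite /inU; case e: (behead _) => [|b s] /=.
  apply/forallP => i; apply/implyP => oi; rewrite -leqn0 leqNgt; apply/negP => i0.
  have := os_wz z; rewrite e => /os_cons1 /(_ i i0); by rewrite oi.
apply/negP => /forallP H; have := os_wz z; rewrite e => /os_cons2 [ob b0 _ _].
have := H (Ordinal (ltnW (occ_lt hw ob) : (b < (size (w ++ z)).+1)%N)).
by rewrite /= ob /= eqn0Ngt b0.
Qed.

Lemma inCo_occ e : inCo w e = [&& (0 < size e)%N, (size e < l)%N & occ (w ++ e) (size e)].
Proof.
rewrite /inCo /inC; case: e => [|a e'] //=; set e := a :: e'.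
rewrite andbT /=; case: (size e < l)%N => //=.
have -> : occ (w ++ e) (size e) = suffix w (w ++ e).
  by rewrite suffix_occ size_cat leq_addr addKn.
apply/existsP/suffixP => [[t /andP [_ /eqP ->]]|[s2 hs]].
  by exists t.
have hsz : size s2 == size e.
  by have := congr1 size hs; rewrite !size_cat addnC => /addIn ->.
exists (Tuple hsz) => /=; by rewrite hs (eqP hsz) eqxx.
Qed.

Lemma inK_M e : inK w e = inM w e && (size e < l)%N.
Proof.
rewrite /inK inCo_occ inM_occ.
case: (ltnP 0 (size e)) => //= e0; case: (ltnP (size e) l) => hl; last by rewrite !andbF.
rewrite andbT; case: (occ (w ++ e) (size e)) => //=.
rewrite negb_exists; apply: eq_forallb => j.
rewrite inCo_occ size_takel ?(ltnW (ltn_ord j)) // wtake occ_take [(l + j)%N]addnC leqnn andbT.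
rewrite size_drop subn_gt0 ltn_ord andbT (ltn_trans (ltn_ord j) hl) /=.
by case: (0 < j)%N.
Qed.


Lemma os_drop_gen x a s : occ x a -> filter (leq a) (os x) = a :: s ->
  os (drop a x) = 0 :: map (subn^~ a) s.
Proof.
move=> oa H; rewrite (os_drop hw) ?H /= ?subnn //.
by apply: ltnW; apply: (occ_lt hw).
Qed.

Lemma os_drop1 x a s : os x = a :: s -> os (drop a x) = 0 :: map (subn^~ a) s.
Proof.
move=> e; case: (os_cons hw e) => oa _ hm; apply: os_drop_gen => //.
rewrite e; apply/all_filterP => /=; rewrite leqnn /=; apply/allP => i.
by rewrite hm => /andP [/ltnW].
Qed.

Lemma os_drop2 x a b s : os x = a :: b :: s -> os (drop b x) = 0 :: map (subn^~ b) s.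
Proof.
move=> e; case: (os_cons2 e) => ob ab _ alls; apply: os_drop_gen => //.
rewrite e /= leqNgt ab /= leqnn; congr (_ :: _); exact/all_filterP.
Qed.

Lemma drop_wz z j : occ (w ++ z) j -> w ++ drop j z = drop j (w ++ z).
Proof.
move/drop_occ <-; congr (_ ++ _).
by rewrite -drop_drop drop_size_cat.
Qed.

Lemma phi_nil c z : behead (os (w ++ z)) = [::] -> phi c z = (c == k).
Proof. by rewrite /phi => ->. Qed.

Lemma phi_step c z j s : behead (os (w ++ z)) = j :: s ->
  phi c z = if (j < l)%N then phi c.+1 (drop j z) else (c == k) + phi 1 (drop j z).
Proof.
move=> e; have e2 : os (w ++ z) = 0 :: j :: s by rewrite (os_wz z) e.
case: (os_cons2 e2) => oj j0 _ alls.
have ed : behead (os (w ++ drop j z)) = map (subn^~ j) s.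
  by rewrite drop_wz // (os_drop2 e2).
rewrite /phi e /= !ed (@cnt_shift j c.+1 s j) ?(@cnt_shift j 1 s j) ?leqnn // subnn add0n. done.
Qed.

Lemma nk_phi x a s : os x = a :: s -> nkclumps w k x = phi 1 (drop (a + l) x).
Proof.
move=> e; case: (os_cons hw e) => oa _ hm.
rewrite nk_cnt e /phi (drop_occ oa) (os_drop1 e) /= (@cnt_shift a 1 s a) ?subnn //.
by apply/allP => i; rewrite hm => /andP [/ltnW].
Qed.

End Comb.

Import Order.TTheory GRing.Theory Num.Theory.
Local Open Scope ring_scope.

Section FA.
Variable S : comUnitRingType.
Implicit Types f g h : fps S.

Definition tr (n : nat) f : {poly S} := \poly_(i < n.+1) f i.

Lemma coef_tr n f i : (tr n f)`_i = if (i < n.+1)%N then f i else 0.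
Proof. by rewrite /tr coef_poly. Qed.

Lemma fmulE f g n : fps_mul f g n = (tr n f * tr n g)`_n.
Proof.
rewrite coefM /fps_mul; apply: eq_bigr => j _.
by rewrite !coef_tr ltn_ord ltnS leq_subr.
Qed.

Lemma coefM_eq (p p' q q' : {poly S}) n :
  (forall i, (i <= n)%N -> p`_i = p'`_i) ->
  (forall i, (i <= n)%N -> q`_i = q'`_i) -> (p * q)`_n = (p' * q')`_n.
Proof.
move=> Hp Hq; rewrite !coefM; apply: eq_bigr => j _.
by rewrite Hp ?Hq ?leq_subr // -ltnS.
Qed.

Lemma tr_mul f g n i : (i <= n)%N ->
  (tr n (fps_mul f g))`_i = (tr n f * tr n g)`_i.
Proof.
move=> hi; rewrite coef_tr ltnS hi fmulE; apply: coefM_eq => j hj;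
by rewrite !coef_tr !ltnS hj (leq_trans hj hi).
Qed.

Lemma fmulC f g : fps_mul f g = fps_mul g f.
Proof. by apply: functional_extensionality => n; rewrite !fmulE mulrC. Qed.

Lemma fmulA f g h : fps_mul f (fps_mul g h) = fps_mul (fps_mul f g) h.
Proof.
apply: functional_extensionality => n; rewrite !fmulE.
rewrite (@coefM_eq _ (tr n f) _ (tr n g * tr n h)) //; last by move=> i; apply: tr_mul.
rewrite (@coefM_eq (tr n (fps_mul f g)) (tr n f * tr n g) (tr n h) (tr n h)) //;
  last by move=> i; apply: tr_mul.
by rewrite mulrA.
Qed.

Lemma fmulDl f g h : fps_mul (fps_add f g) h = fps_add (fps_mul f h) (fps_mul g h).
Proof.
apply: functional_extensionality => n; rewrite /fps_mul /fps_add -big_split /=.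
by apply: eq_bigr => j _; rewrite mulrDl.
Qed.

Lemma fmulDr f g h : fps_mul h (fps_add f g) = fps_add (fps_mul h f) (fps_mul h g).
Proof. by rewrite fmulC fmulDl !(fmulC h). Qed.

Lemma fmulBl f g h : fps_mul (fps_sub f g) h = fps_sub (fps_mul f h) (fps_mul g h).
Proof.
apply: functional_extensionality => n; rewrite /fps_mul /fps_sub -sumrB /=.
by apply: eq_bigr => j _; rewrite mulrBl.
Qed.

Lemma fmulBr f g h : fps_mul h (fps_sub f g) = fps_sub (fps_mul h f) (fps_mul h g).
Proof. by rewrite fmulC fmulBl !(fmulC h). Qed.

Lemma fmulCl (c : S) f : fps_mul (fps_C c) f = fps_scale c f.
Proof.
apply: functional_extensionality => n; rewrite /fps_mul /fps_scale big_ord_recl.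
rewrite big1 ?addr0 /fps_C //= ?subn0 // => j _; by rewrite mul0r.
Qed.

Lemma fmul1 f : fps_mul (fps_one S) f = f.
Proof.
rewrite /fps_one fmulCl; apply: functional_extensionality => n.
by rewrite /fps_scale mul1r.
Qed.

Lemma scale_mul c f g : fps_mul (fps_scale c f) g = fps_scale c (fps_mul f g).
Proof.
apply: functional_extensionality => n; rewrite /fps_mul /fps_scale mulr_sumr.
by apply: eq_bigr => j _; rewrite mulrA.
Qed.

Lemma scale_scale c d f : fps_scale c (fps_scale d f) = fps_scale (c * d) f.
Proof. by apply: functional_extensionality => n; rewrite /fps_scale mulrA. Qed.

Lemma scale1 f : fps_scale 1 f = f.
Proof. by apply: functional_extensionality => n; rewrite /fps_scale mul1r. Qed.

Lemma Xn_divXn l f : (forall j, (j < l)%N -> f j = 0) ->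
  fps_mul (fps_Xn S l) (fps_divXn l f) = f.
Proof.
move=> H; apply: functional_extensionality => n; rewrite /fps_mul /fps_Xn /fps_divXn.
case: (leqP l n) => hl.
  rewrite (bigD1 (Ordinal (hl : (l < n.+1)%N))) //= eqxx mul1r subnK //.
  rewrite big1 ?addr0 // => j hj; case: eqP => [e|_]; last by rewrite mul0r.
  by case/eqP: hj; apply: val_inj.
rewrite big1 ?H // => j _; case: eqP => [e|]; last by rewrite mul0r.
by have := ltn_ord j; rewrite e ltnS leqNgt hl.
Qed.

Lemma size_inv_seq f n : size (fps_inv_seq f n) = n.+1.
Proof. by elim: n => //= n IH; rewrite size_rcons IH. Qed.

Lemma nth_inv_seq f n j : (j <= n)%N -> nth 0 (fps_inv_seq f n) j = fps_inv f j.
Proof.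
elim: n => [|n IH]; first by rewrite leqn0 => /eqP ->.
rewrite leq_eqVlt => /orP[/eqP -> //|hj].
by rewrite /= nth_rcons size_inv_seq hj IH.
Qed.

Lemma inv_S f n : fps_inv f n.+1 =
  - (f 0%N)^-1 * \sum_(j < n.+1) f (n.+1 - j)%N * fps_inv f j.
Proof.
rewrite {1}/fps_inv /= nth_rcons size_inv_seq ltnn eqxx; congr (_ * _).
by apply: eq_bigr => j _; rewrite nth_inv_seq // -ltnS.
Qed.

Lemma fmul_inv f : f 0%N = 1 -> fps_mul f (fps_inv f) = fps_one S.
Proof.
move=> f0; rewrite fmulC; apply: functional_extensionality => n.
case: n => [|n].
  by rewrite /fps_mul big_ord1 /fps_inv /= f0 invr1 mulr1.
rewrite /fps_mul big_ord_recr /= subnn f0 mulr1 inv_S f0 invr1 mulN1r.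
rewrite /fps_one /fps_C /=; apply/eqP; rewrite subr_eq0; apply/eqP.
by apply: eq_bigr => j _; rewrite mulrC.
Qed.

Lemma inv_unique f g h : f 0%N = 1 -> fps_mul f g = h -> g = fps_mul (fps_inv f) h.
Proof.
move=> f0 <-; rewrite fmulA (fmulC (fps_inv f)) fmul_inv //.
by rewrite fmul1.
Qed.

End FA.

Section Words2.
Variable A : finType.

Fixpoint W (n : nat) : seq (seq A) :=
  if n is n'.+1 then [seq a :: t | a <- enum A, t <- W n'] else [:: [::]].

Lemma size_W n x : x \in W n -> size x = n.
Proof.
elim: n x => [|n IH] x /=; first by rewrite inE => /eqP ->.
by case/allpairsP => [[a t] [_ /IH h ->]] /=; rewrite h.
Qed.

Variable V : nmodType.

Lemma sum_tuple_W n (F : seq A -> V) :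
  \sum_(x : n.-tuple A) F x = \sum_(x <- W n) F x.
Proof.
elim: n F => [|n IH] F.
  rewrite /= big_seq1 (big_pred1 [tuple]) // => t /=.
  by symmetry; apply/eqP/val_inj; rewrite /= (tuple0 t).
rewrite /= big_allpairs_dep.
rewrite (reindex (fun p : A * n.-tuple A => [tuple of p.1 :: p.2])) /=; last first.
  exists (fun t : n.+1.-tuple A => (thead t, [tuple of behead t])) => [[a t]|t] _ /=.
    by congr (_, _); apply: val_inj.
  by apply: val_inj => /=; case: t => [[|b s]] //.
rewrite -(pair_big predT predT (fun a (t : n.-tuple A) => F (a :: t))) /=.
rewrite -big_enum /=; apply: eq_bigr => a _; exact: IH.
Qed.

Lemma sum_W_cat i j (F : seq A -> V) :
  \sum_(x <- W (i + j)) F x = \sum_(a <- W i) \sum_(b <- W j) F (a ++ b).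
Proof.
elim: i F => [|i IH] F; first by rewrite /= big_seq1.
rewrite addSn /= !big_allpairs_dep; apply: eq_bigr => a _.
exact: (IH (fun x => F (a :: x))).
Qed.
End Words2.

Section GFW.
Variable R : fieldType.
Variable A : finType.
Variable p : A -> R.

Definition gfw (f : seq A -> {poly R}) : fps {poly R} :=
  fun n => \sum_(x <- W A n) f x.

Lemma mul_gfw f g n :
  fps_mul (gfw f) (gfw g) n =
  \sum_(x <- W A n) \sum_(j < n.+1) f (take j x) * g (drop j x).
Proof.
rewrite /fps_mul /gfw exchange_big /=; apply: eq_bigr => j _.
have hj : W A n = W A (j + (n - j)) by rewrite subnKC // -ltnS.
rewrite hj sum_W_cat mulr_suml; apply: eq_big_seq => a ha.
rewrite mulr_sumr; apply: eq_bigr => b _.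
by rewrite take_size_cat ?drop_size_cat // (size_W ha).
Qed.

Lemma Pw_cat a b : Pw p (a ++ b) = Pw p a * Pw p b.
Proof. by rewrite /Pw big_cat. Qed.

Lemma gf_gfw (L : pred (seq A)) :
  gf p L = gfw (fun x => if L x then (Pw p x)%:P else 0).
Proof.
apply: functional_extensionality => n; rewrite /gf /gfw rmorph_sum /=.
rewrite big_mkcond /=. exact: (sum_tuple_W _ (fun x => if L x then (Pw p x)%:P else 0)).
Qed.
End GFW.

Lemma sum_single (V : nmodType) n j0 (hj : (j0 < n.+1)%N) (F : 'I_n.+1 -> V) :
  (forall j : 'I_n.+1, (j : nat) != j0 -> F j = 0) -> \sum_(j < n.+1) F j = F (Ordinal hj).
Proof.
move=> H; rewrite (bigD1 (Ordinal hj)) //= big1 ?addr0 // => j hj'.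
Qed.

Section Main.
Variable R : fieldType.
Variable A : finType.
Variable p : A -> R.
Variable w : seq A.
Variable k : nat.
Hypothesis hw : (0 < size w)%N.
Local Notation l := (size w).
Local Notation P x := ((Pw p x)%:P).

Definition Fv := gfw (fun x => P x * 'X^(nkclumps w k x)).
Definition Zc c := gfw (fun z => P z * 'X^(phi w k c z)).
Definition Mge := gfw (fun m => if inM w m && (l <= size m)%N then P m else 0).

Lemma P_take_drop x j : P (take j x) * P (drop j x) = P x.
Proof. by rewrite -polyCM -Pw_cat cat_take_drop. Qed.

Lemma B1 : Fv = fps_add (Ng p w) (fps_mul (Rg p w) (Zc 1)).
Proof.
apply: functional_extensionality => n.
rewrite /fps_add /Ng /Rg !gf_gfw mul_gfw /Fv /gfw -big_split /=.
apply: eq_big_seq => x /size_W hx.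
case e: (os w x) => [|a s].
  rewrite (inN_os hw) e /= (nk_cnt k hw) e /= expr0 mulr1 big1 ?addr0 //.
  by move=> j _; rewrite (inR_take_nil hw) ?mul0r.
rewrite (inN_os hw) e /= add0r.
case: (os_cons hw e) => oa _ _.
have hal : (a + l <= n)%N by rewrite -hx; case/andP: oa.
rewrite (sum_single (hal : (a + l < n.+1)%N)) /=; last first.
  by move=> j hj; rewrite (inR_take_cons hw e) ?hx -1?ltnS // (negbTE hj) mul0r.
rewrite (inR_take_cons hw e) ?hx // eqxx mulrA P_take_drop.
by rewrite (nk_phi k hw e).
Qed.

Lemma B2 c : Zc c = fps_add (fps_mul (fps_C ('X^(c == k))) (fps_add (Ug p w) (fps_mul Mge (Zc 1))))
                            (fps_mul (Kg p w) (Zc c.+1)).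
Proof.
apply: functional_extensionality => n.
rewrite /fps_add fmulCl /fps_scale /Ug /Kg !gf_gfw !mul_gfw /Zc /gfw.
rewrite -big_split mulr_sumr -big_split /=.
apply: eq_big_seq => z /size_W hz.
have hsz j : (j < n.+1)%N -> size (take j z) = j by move=> hj; rewrite size_takel // hz -ltnS.
case e: (behead (os w (w ++ z))) => [|j s].
  have e1 : os w (w ++ z) = [:: 0%N] by rewrite (os_wz hw) e.
  rewrite (inU_os hw) e /= (phi_nil k c e) !big1 ?addr0; first by rewrite mulrC.
    by move=> j _; rewrite inK_M (inM_take_nil hw) ?mul0r.
  by move=> j _; rewrite (inM_take_nil hw) ?mul0r.
have e2 : os w (w ++ z) = [:: 0%N, j & s] by rewrite (os_wz hw) e.
case: (os_cons2 hw e2) => oj j0 _ _.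
have hj : (j < n.+1)%N by rewrite ltnS -hz; case/andP: oj => h _; rewrite size_cat (addnC l) leq_add2r in h.
have hM j' : (j' < n.+1)%N -> inM w (take j' z) = (j' == j).
  by move=> h; rewrite (inM_take_cons hw e2) // hz -ltnS.
have hK j' : (j' < n.+1)%N -> inK w (take j' z) = (j' == j) && (j' < l)%N.
  by move=> h; rewrite inK_M hM // hsz.
have hG j' : (j' < n.+1)%N -> inM w (take j' z) && (l <= size (take j' z))%N = (j' == j) && (l <= j')%N.
  by move=> h; rewrite hM // hsz.
rewrite (inU_os hw) e /= (phi_step k hw c e) add0r.
case: (ltnP j l) => hjl.
  rewrite big1 ?mulr0 ?add0r; last first.
    move=> j' _; rewrite hG //; case: eqP => [->|_]; last by rewrite mul0r.
    by rewrite (leqNgt l j) hjl mul0r.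
  rewrite (sum_single hj) /=; last first.
    by move=> j' hj'; rewrite hK // (negbTE hj') mul0r.
  by rewrite hK // eqxx hjl mulrA P_take_drop.
rewrite [X in _ + X]big1 ?addr0; last first.
  move=> j' _; rewrite hK //; case: eqP => [->|_]; last by rewrite mul0r.
  by rewrite ltnNge hjl mul0r.
rewrite (sum_single hj) /=; last first.
  by move=> j' hj'; rewrite hG // (negbTE hj') mul0r.
rewrite hG // eqxx hjl mulrA P_take_drop.
by rewrite exprD mulrCA.
Qed.
End Main.

Section Alg.
Variable S : comUnitRingType.
Implicit Types f g h : fps S.
Local Notation one := (fps_one S).

Lemma ptw f g : (forall n, f n = g n) -> f = g.
Proof. exact: functional_extensionality. Qed.


Lemma fmulCn (c : S) f n : fps_mul (fps_C c) f n = c * f n.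
Proof. by rewrite fmulCl. Qed.

Lemma mul1r' f : fps_mul f one = f.
Proof. by rewrite fmulC fmul1. Qed.

Lemma inv_fix K : K 0%N = 0 ->
  fps_inv (fps_sub one K) = fps_add one (fps_mul K (fps_inv (fps_sub one K))).
Proof.
move=> K0; set J := fps_inv _.
have JJ : fps_mul (fps_sub one K) J = one by apply: fmul_inv; rewrite /fps_sub K0 subr0.
rewrite fmulBl fmul1 in JJ.
apply: ptw => n; have := congr1 (fun f => f n) JJ; rewrite /fps_sub /fps_add => <-.
by rewrite subrK.
Qed.

Variables (K Hh : fps S) (Z : nat -> fps S) (k : nat) (x : S).
Hypothesis K0 : K 0%N = 0.
Hypothesis hZ : forall c, Z c = fps_add (fps_mul (fps_C (x ^+ (c == k))) Hh) (fps_mul K (Z c.+1)).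
Hypothesis hZbig : forall c, (k < c)%N -> Z c = Z k.+1.
Hypothesis k1 : (1 <= k)%N.

Local Notation J := (fps_inv (fps_sub one K)).
Definition Gd d := fps_add J (fps_mul (fps_C (x - 1)) (fps_exp K d)).

Lemma Zinf : Z k.+1 = fps_mul J Hh.
Proof.
have e : Z k.+1 = fps_add Hh (fps_mul K (Z k.+1)).
  rewrite {1}hZ (hZbig (ltnW (ltnSn k.+1))) (gtn_eqF (ltnSn k)) expr0 fmulCl scale1 //.
apply: inv_unique; first by rewrite /fps_sub /fps_one /fps_C K0 subr0.
rewrite fmulBl fmul1; apply: ptw => n; rewrite /fps_sub {1}e /fps_add.
by rewrite addrK.
Qed.

Lemma JH : fps_mul J Hh = fps_add Hh (fps_mul K (fps_mul J Hh)).
Proof. by rewrite {1}(inv_fix K0) fmulDl fmul1 fmulA. Qed.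

Lemma Zd d : (d < k)%N -> Z (k - d) = fps_mul (Gd d) Hh.
Proof.
elim: d => [|d IH] hd.
  rewrite subn0 hZ eqxx expr1 Zinf /Gd fmulDl /= mul1r' {2}JH !fmulCl.
  apply: ptw => n; rewrite /fps_add /fps_scale mulrBl mul1r.
  by rewrite addrAC [Hh n + _]addrC subrK.
have hc : (k - d = (k - d.+1).+1)%N by rewrite subnS prednK // subn_gt0 (ltnW hd).
have hne : ((k - d.+1)%N == k) = false.
  by apply: ltn_eqF; rewrite ltn_subrL k1.
rewrite hZ -hc IH ?(ltnW hd) // hne expr0 fmulCl scale1 /Gd !fmulDl /=.
rewrite !fmulDr -!fmulA.
rewrite (fmulA K (fps_C _)) (fmulC K (fps_C _)) -(fmulA (fps_C _) K).
rewrite [in RHS]JH; apply: ptw => n; rewrite /fps_add; by rewrite addrA.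
Qed.

Lemma Z1 : Z 1 = fps_mul (Gd (k - 1)) Hh.
Proof. by rewrite -Zd ?subKn // subn1 prednK. Qed.

End Alg.

Section Final.
Variable S : comUnitRingType.
Local Notation one := (fps_one S).
Variables (Fv N Rr M U Q Z1 : fps S).
Hypothesis hF : Fv = fps_add N (fps_mul Rr Z1).
Hypothesis hZ1 : Z1 = fps_mul Q (fps_add U (fps_mul M Z1)).
Hypothesis M0 : M 0%N = 0.

Lemma final : Fv = fps_add N (fps_mul (fps_mul (fps_mul Rr Q) (fps_inv (fps_sub one (fps_mul M Q)))) U).
Proof.
have D0 : fps_sub one (fps_mul M Q) 0%N = 1.
  by rewrite /fps_sub /fps_one /fps_C /fps_mul big_ord1 M0 mul0r subr0.
have e : Z1 = fps_mul (fps_inv (fps_sub one (fps_mul M Q))) (fps_mul Q U).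
  apply: inv_unique => //; rewrite fmulBl fmul1.
  apply: ptw => n; rewrite /fps_sub {1}hZ1 fmulDr /fps_add.
  by rewrite (fmulC M Q) -fmulA addrK.
rewrite hF e; congr fps_add.
rewrite -!fmulA; congr (fps_mul Rr _); by rewrite fmulA (fmulC _ Q) -fmulA.
Qed.
End Final.

Section Main2.
Variable R : fieldType.
Variable A : finType.
Variable p : A -> R.
Variable w : seq A.
Variable k : nat.
Hypothesis hw : (0 < size w)%N.
Local Notation l := (size w).
Local Notation P x := ((Pw p x)%:P).

Lemma Kg0 : Kg p w 0%N = 0.
Proof. by rewrite /Kg gf_gfw /gfw /= big_seq1 inK_M /inM. Qed.

Lemma MK : fps_sub (Mg p w) (Kg p w) = Mge p w.
Proof.
apply: functional_extensionality => n.
rewrite /fps_sub /Mg /Kg !gf_gfw /Mge /gfw -sumrB; apply: eq_bigr => x _.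
rewrite inK_M; case: (inM w x) => /=; last by rewrite subr0.
by case: ltnP => _; rewrite ?subrr ?subr0.
Qed.

Lemma Mge_low j : (j < l)%N -> Mge p w j = 0.
Proof.
move=> hj; rewrite /Mge /gfw big1_seq // => x /andP [_ /size_W ->].
by rewrite leqNgt hj andbF.
Qed.

Lemma Rg_low j : (j < l)%N -> Rg p w j = 0.
Proof.
move=> hj; rewrite /Rg gf_gfw /gfw big1_seq // => x /andP [_ /size_W hx].
by rewrite /inR suffix_occ hx leqNgt hj.
Qed.

Lemma Zbig c : (k < c)%N -> Zc p w k c = Zc p w k k.+1.
Proof.
move=> hc; apply: functional_extensionality => n; rewrite /Zc /gfw.
by apply: eq_bigr => z _; rewrite /phi (cnt_big w 0 _ hc (ltnSn k)).
Qed.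

Lemma ok_Fv n i : o_k p w k n i = (Fv p w k n)`_i.
Proof.
rewrite /o_k /Fv /gfw coef_sum big_mkcond /=.
rewrite (sum_tuple_W n (fun x => if nkclumps w k x == i then Pw p x else 0)).
apply: eq_bigr => x _; rewrite coefCM coefXn eq_sym.
by case: eqP; rewrite ?mulr1 ?mulr0.
Qed.

Hypothesis hpi : pi_w p w != 0.
Local Notation Q' := (Gd (Kg p w) 'X (k - 1)).

Lemma div_frak F : (forall j, (j < l)%N -> F j = 0) ->
  fps_mul (div_piz p w F) (frakK p w k) = fps_mul F Q'.
Proof.
move=> HF; rewrite /div_piz /frakK scale_mul (fmulC _ (fps_scale _ _)) scale_mul.
rewrite scale_scale -polyCM mulVf // scale1.
rewrite fmulC fmulA (fmulC (fps_divXn _ _)) Xn_divXn //.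
Qed.

End Main2.

Theorem mainTheorem7 (R : realFieldType) (A : finType) (p : A -> R)
    (w : seq A) (k : nat) :
  (1 < #|A|)%N ->
  (forall a : A, 0 < p a) ->
  \sum_(a : A) p a = 1 ->
  (2 <= size w)%N ->
  (1 <= k)%N ->
  forall n i : nat, o_k p w k n i = (rhs7 p w k n)`_i.
Proof.
move=> _ hp _ hw2 hk n i.
have hw : (0 < size w)%N by apply: leq_trans hw2.
have hpi : pi_w p w != 0.
  by rewrite /pi_w /Pw; apply: lt0r_neq0; apply: prodr_gt0 => a _; apply: hp.
rewrite ok_Fv; suff -> : Fv p w k = rhs7 p w k by [].
rewrite /rhs7 (@div_frak _ _ p w k hpi (Rg p w) (@Rg_low _ _ p w)) MK.
rewrite (@div_frak _ _ p w k hpi (Mge p w) (@Mge_low _ _ p w)).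
apply: (final (Z1 := Zc p w k 1)).
- exact: (B1 p k hw).
- apply: (Z1 (Z := Zc p w k)) => //; first exact: Kg0.
    by move=> c; rewrite (B2 p k hw c).
  by move=> c hc; apply: Zbig.
- by apply: Mge_low.
Qed.
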